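(* (i) For every IFA $\mathcal{A}$ with $n$ states there is a deterministic finite automaton with at most $2^n$ states accepting $L(\mathcal{A})$. (ii) For every $n \ge 3$ there exists an IFA with $n$ states such that every deterministic finite automaton accepting its language has at least $2^n$ states.
   Context: A $\mathbb{Q}$-weighted automaton $\mathcal{A} = (Q, \Sigma, M, \alpha, \eta)$ consists of a finite state set $Q$, finite alphabet $\Sigma$, $M : \Sigma \to \mathbb{Q}^{Q\times Q}$, initial row vector $\alpha \in \mathbb{Q}^Q$, final column vector $\eta \in \mathbb{Q}^Q$; with $M(a_1\cdots a_k) = M(a_1)\cdots M(a_k)$, it assigns $L_\mathcal{A}(w) = \alpha M(w)\eta$ to each $w \in \Sigma^*$. It is an IFA if $L_\mathcal{A}(w) \in \{0,1\}$ for all $w$, and then $L(\mathcal{A}) = \{w \mid L_\mathcal{A}(w) = 1\}$. The number of states of $\mathcal{A}$ is $|Q|$. *)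

(* Defs.v *)
From HB Require Import structures.
From mathcomp Require Import all_boot all_order all_algebra.
Set Implicit Arguments. Unset Strict Implicit. Unset Printing Implicit Defensive.
Import GRing.Theory Num.Theory.
Local Open Scope ring_scope.

Record wautomaton (Sigma : finType) (n : nat) := WAutomaton {
  wa_M : Sigma -> 'M[rat]_n;
  wa_alpha : 'rV[rat]_n;
  wa_eta : 'cV[rat]_n }.

Definition wa_word_mx (Sigma : finType) (n : nat) (A : wautomaton Sigma n)
  (w : seq Sigma) : 'M[rat]_n :=
  foldr (fun a B => wa_M A a *m B) 1%:M w.

Definition wa_weight (Sigma : finType) (n : nat) (A : wautomaton Sigma n)
  (w : seq Sigma) : rat :=
  (wa_alpha A *m wa_word_mx A w *m wa_eta A) ord0 ord0.

Definition is_IFA (Sigma : finType) (n : nat) (A : wautomaton Sigma n) : Prop :=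
  forall w : seq Sigma, wa_weight A w = 0 \/ wa_weight A w = 1.

Definition IFA_lang (Sigma : finType) (n : nat) (A : wautomaton Sigma n)
  (w : seq Sigma) : Prop := wa_weight A w = 1.

Record dfa (Sigma : finType) := DFA {
  dfa_state : finType;
  dfa_start : dfa_state;
  dfa_trans : dfa_state -> Sigma -> dfa_state;
  dfa_final : pred dfa_state }.

Definition dfa_accepts (Sigma : finType) (D : dfa Sigma) (w : seq Sigma) : bool :=
  @dfa_final Sigma D (foldl (@dfa_trans Sigma D) (@dfa_start Sigma D) w).

Definition dfa_accepts_lang (Sigma : finType) (D : dfa Sigma)
  (L : seq Sigma -> Prop) : Prop :=
  forall w : seq Sigma, dfa_accepts D w <-> L w.

(* Main.v *)
Require Import Defs.
From mathcomp Require Import all_boot all_order all_algebra.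
From Stdlib Require Import Classical ClassicalEpsilon Lia.
From mathcomp Require Import zify.
Set Implicit Arguments. Unset Strict Implicit. Unset Printing Implicit Defensive.
Import GRing.Theory Num.Theory.
Local Open Scope ring_scope.

Section Part1.
Variables (Sigma : finType) (n : nat) (A : wautomaton Sigma n).

Lemma word_nil : wa_word_mx A [::] = 1%:M. Proof. by []. Qed.
Lemma word_cons a u : wa_word_mx A (a :: u) = wa_M A a *m wa_word_mx A u.
Proof. by []. Qed.

Lemma word_cat u v : wa_word_mx A (u ++ v) = wa_word_mx A u *m wa_word_mx A v.
Proof.
elim: u => [|a u IH]; first by rewrite cat0s word_nil mul1mx.
by rewrite cat_cons !word_cons IH mulmxA.
Qed.

Definition rv (v : seq Sigma) : 'rV[rat]_n := (wa_word_mx A v *m wa_eta A)^T.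
Definition fu (u : seq Sigma) : 'cV[rat]_n := (wa_alpha A *m wa_word_mx A u)^T.

Lemma weight_cat u v : wa_weight A (u ++ v) = (rv v *m fu u) 0 0.
Proof.
by rewrite /wa_weight word_cat /rv /fu -trmx_mul [in RHS]mxE !mulmxA.
Qed.

Definition Mvs (vs : seq (seq Sigma)) : 'M[rat]_(size vs, n) :=
  \matrix_(i, j) rv (nth [::] vs i) 0 j.

Lemma Mvs_entry vs u (i : 'I_(size vs)) :
  (Mvs vs *m fu u) i 0 = wa_weight A (u ++ nth [::] vs i).
Proof.
rewrite weight_cat !mxE; apply: eq_bigr => j _; by rewrite mxE.
Qed.

Lemma row_Mvs vs (i : 'I_(size vs)) : row i (Mvs vs) = rv (nth [::] vs i).
Proof. by apply/rowP => j; rewrite !mxE. Qed.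

Lemma Mvs_sub v vs : (Mvs vs <= Mvs (v :: vs))%MS.
Proof.
apply/row_subP => i; rewrite row_Mvs.
have := row_sub (lift ord0 i : 'I_(size (v :: vs))) (Mvs (v :: vs)).
by rewrite (@row_Mvs (v :: vs)).
Qed.
Lemma Mvs_head v vs : (rv v <= Mvs (v :: vs))%MS.
Proof.
have := row_sub (ord0 : 'I_(size (v :: vs))) (Mvs (v :: vs)).
by rewrite (@row_Mvs (v :: vs)).
Qed.

Lemma Mvs_rank v vs : \rank (Mvs vs) = size vs -> ~~ (rv v <= Mvs vs)%MS ->
  \rank (Mvs (v :: vs)) = (size vs).+1.
Proof.
move=> Hr Hv; have Hsub := Mvs_sub v vs.
have H1 := mxrankS Hsub.
have H2 : \rank (Mvs vs) != \rank (Mvs (v :: vs)).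
  rewrite ((mxrank_leqif_sup Hsub).2); apply/negP => Hs; move/negP: Hv; apply.
  exact: submx_trans (Mvs_head v vs) Hs.
have H3 := rank_leq_row (Mvs (v :: vs)).
move: H1 H2 H3; rewrite Hr /=.
move: (\rank (Mvs (v :: vs))) => r; clear; lia.
Qed.

Lemma basis_exists : exists vs, (size vs <= n)%N /\ forall v, (rv v <= Mvs vs)%MS.
Proof.
suff H : forall d vs, \rank (Mvs vs) = size vs -> (n - size vs <= d)%N ->
  exists vs, (size vs <= n)%N /\ forall v, (rv v <= Mvs vs)%MS.
  apply: (H n [::]); last by rewrite subn0.
  by apply/eqP; rewrite -leqn0 (rank_leq_row (Mvs [::])).
elim=> [|d IH] vs Hr Hd;
  (case: (classic (forall v, (rv v <= Mvs vs)%MS)) => [Hall|Hn];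
   [by exists vs; split => //; rewrite -Hr rank_leq_col|]);
  have [v /negP Hv] := not_all_ex_not _ _ Hn;
  have Hr' := Mvs_rank Hr Hv;
  have := rank_leq_col (Mvs (v :: vs)); rewrite Hr' => Hl.
- by move: Hd Hl; clear; lia.
- apply: (IH (v :: vs)) => //.
  by move: Hd Hl; rewrite /=; clear; lia.
Qed.

End Part1.

Lemma part1 (Sigma : finType) (n : nat) (A : wautomaton Sigma n) :
  is_IFA A ->
  exists D : dfa Sigma,
    (#|@dfa_state Sigma D| <= 2 ^ n)%N /\ dfa_accepts_lang D (IFA_lang A).
Proof.
move=> HA.
have [vs [Hsz Hspan]] := basis_exists A.
pose st (u : seq Sigma) : {ffun 'I_n -> bool} :=
  [ffun i : 'I_n => wa_weight A (u ++ nth [::] vs i) == 1].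
have key : forall u u', st u = st u' -> forall v, wa_weight A (u ++ v) = wa_weight A (u' ++ v).
  move=> u u' Hst.
  have HM : Mvs A vs *m fu A u = Mvs A vs *m fu A u'.
    apply/matrixP => i j; rewrite (ord1 j) !Mvs_entry.
    have Hi : (i < n)%N by apply: leq_trans (ltn_ord i) Hsz.
    have := congr1 (fun f : {ffun 'I_n -> bool} => f (Ordinal Hi)) Hst; rewrite !ffunE /=.
    by case: (HA (u ++ nth [::] vs i)) => ->; case: (HA (u' ++ nth [::] vs i)) => ->;
      rewrite ?eqxx ?oner_eq0 ?(eq_sym 0) ?oner_eq0.
  move=> v; rewrite !weight_cat.
  have /submxP [C ->] := Hspan v.
  by rewrite -!mulmxA HM.
pose rep (b : {ffun 'I_n -> bool}) := epsilon (inhabits [::]) (fun u => st u = b).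
have rep_spec : forall u, st (rep (st u)) = st u.
  by move=> u; apply: (epsilon_spec (inhabits [::]) (fun u' => st u' = st u)); exists u.
pose D := @DFA Sigma {ffun 'I_n -> bool} (st [::])
  (fun b a => st (rep b ++ [:: a])) (fun b => wa_weight A (rep b) == 1).
have run : forall (w u : seq Sigma), foldl (@dfa_trans Sigma D) (st u) w = st (u ++ w).
  elim=> [|a w IH] u /=; first by rewrite cats0.
  have -> : u ++ a :: w = (u ++ [:: a]) ++ w by rewrite -catA.
  rewrite -IH; congr (foldl _ _ _).
  apply/ffunP => i; rewrite !ffunE -!catA /=.
  by rewrite (key _ _ (rep_spec u)).
exists D; split.
  by rewrite card_ffun card_bool card_ord.
move=> w; rewrite /dfa_accepts /IFA_lang.
rewrite [@dfa_start Sigma D]/= -[w]cat0s run cat0s /=.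
have := key _ _ (rep_spec w) [::]; rewrite !cats0 => ->.
by split => /eqP.
Qed.

Section Part2.
Variable m : nat.
Local Notation N := m.+1.
Definition Sig := (bool * 'I_N)%type.
Definition Gl (a : Sig) (j : 'I_N) : option 'I_N :=
  if a.1 then Some a.2 else if j == a.2 then None else Some j.
Definition pmx (g : 'I_N -> option 'I_N) : 'M[rat]_N :=
  \matrix_(i, j) ((g j == Some i)%:R).

Lemma pmx_mul g h : pmx g *m pmx h = pmx (fun j => obind g (h j)).
Proof.
apply/matrixP => i j; rewrite !mxE.
under eq_bigr => l _ do rewrite !mxE.
case E: (h j) => [k|] /=.
  rewrite (bigD1 k) //= eqxx mulr1 big1 ?addr0 // => l Hl.
  by case: (@eqP _ (Some k) (Some l)) => [[] H|_]; [rewrite H eqxx in Hl|rewrite mulr0].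
by rewrite big1 // => l _; rewrite mulr0.
Qed.

Definition GW (w : seq Sig) : 'I_N -> option 'I_N :=
  foldr (fun a g j => obind (Gl a) (g j)) (@Some _) w.

Definition Aut : wautomaton Sig N :=
  @WAutomaton Sig N (fun a => pmx (Gl a)) (const_mx 1) (delta_mx 0 0).

Lemma word_pmx w : wa_word_mx Aut w = pmx (GW w).
Proof.
elim: w => [|a w IH].
  by apply/matrixP => i j; rewrite !mxE (inj_eq (@Some_inj _)) eq_sym.
by rewrite word_cons IH pmx_mul.
Qed.

Lemma weight_GW w : wa_weight Aut w = (GW w ord0 != None)%:R.
Proof.
rewrite /wa_weight word_pmx /= -mulmxA -colE !mxE.
under eq_bigr => i _ do rewrite !mxE mul1r.
case: (GW w ord0) => [k|] /=.
  rewrite (bigD1 k) //= eqxx big1 ?addr0 // => l Hl.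
  by case: (@eqP _ (Some k) (Some l)) => [[] H|_]; [rewrite H eqxx in Hl|].
by rewrite big1.
Qed.

Lemma GW_cat u v j : GW (u ++ v) j = obind (GW u) (GW v j).
Proof.
elim: u => [|a u IH] /=; first by case: (GW v j).
by rewrite IH; case: (GW v j).
Qed.

Lemma GW_kill s i : GW [seq (false, k) | k <- s] i = if i \in s then None else Some i.
Proof.
elim: s => [|k s IH] //=.
rewrite IH in_cons; case: (i \in s); rewrite ?orbT //= /Gl /=.
by rewrite orbF.
Qed.

Definition uT (T : {ffun 'I_N -> bool}) : seq Sig :=
  [seq (false, k) | k <- [seq k <- enum 'I_N | ~~ T k]].

Lemma weight_probe T i : wa_weight Aut (uT T ++ [:: (true, i)]) = (T i)%:R.
Proof.
rewrite weight_GW GW_cat /= /Gl /= GW_kill mem_filter mem_enum andbT.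
by case: (T i).
Qed.

Lemma part2 : is_IFA Aut /\
  forall D : dfa Sig, dfa_accepts_lang D (IFA_lang Aut) -> (2 ^ N <= #|@dfa_state Sig D|)%N.
Proof.
split.
  by move=> w; rewrite weight_GW; case: (GW w ord0) => /=; [right|left].
move=> D HD.
pose f (T : {ffun 'I_N -> bool}) := foldl (@dfa_trans Sig D) (@dfa_start Sig D) (uT T).
have finj : injective f.
  move=> T T' Hf; apply/ffunP => i.
  have H1 := HD (uT T ++ [:: (true, i)]).
  have H2 := HD (uT T' ++ [:: (true, i)]).
  move: H1 H2; rewrite /dfa_accepts !foldl_cat -/(f T) -/(f T') Hf /IFA_lang !weight_probe.
  move=> H1 H2.
  have E : forall b : bool, (b%:R = 1 :> rat) <-> b by case; split => //= /eqP; rewrite eq_sym oner_eq0.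
  by apply/idP/idP => Hi; [apply/E; apply/H2; apply/H1; apply/E | apply/E; apply/H1; apply/H2; apply/E].
have := leq_card f finj.
by rewrite card_ffun card_bool card_ord.
Qed.
End Part2.

Local Close Scope ring_scope.

Theorem corollary2 :
  (forall (Sigma : finType) (n : nat) (A : wautomaton Sigma n),
      is_IFA A ->
      exists D : dfa Sigma,
        #|@dfa_state Sigma D| <= 2 ^ n /\ dfa_accepts_lang D (IFA_lang A))
  /\
  (forall n : nat, 3 <= n ->
      exists (Sigma : finType) (A : wautomaton Sigma n),
        is_IFA A /\
        forall D : dfa Sigma, dfa_accepts_lang D (IFA_lang A) ->
          2 ^ n <= #|@dfa_state Sigma D|).
Proof.
split; first exact: part1.
case=> [|m] // _.
exists (Sig m), (Aut m); exact: part2.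
Qed.
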